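(* Let $H=(V,E_H)$ be a connected graph with $n=|V|\ge2$, edge weights $w$ and costs $c$. Suppose $F\subseteq E_H$ satisfies $c(F)\le B$, $H\setminus F$ is connected, and $p_H(F)=P>0$. Then there exist an edge $e=\{u,v\}\in E_H$ and a value $W\in\{w(f):f\in E_H\}$ such that, letting $C$ be a minimum-cost set of edges of $H_W=(V,\{f\in E_H:w(f)<W\})$ whose removal separates $u$ from $v$ in $H_W$, we have $0<c(C)\le B$ and $$\frac{W-w(e)}{c(C)}\ge\frac{P}{2B\log n}.$$ (Such a $C$ is a partial cut $C_H(S,W)$ with $e$ crossing $C_H(S)$.)
   Context: $w:E_H\to\mathbb{R}_{\ge0}$, $c:E_H\to\mathbb{R}_{>0}$, $c(D)=\sum_{f\in D}c(f)$, $H\setminus D=(V,E_H\setminus D)$. $\mathrm{MST}(\cdot)$ is minimum spanning tree weight w.r.t. $w$ ($\infty$ for disconnected graphs), and $p_H(D)=\mathrm{MST}(H\setminus D)-\mathrm{MST}(H)$. Partial cut: $C_H(S,W)=\{e\in E_H:|e\cap S|=1,\ w(e)<W\}$ for $\emptyset\ne S\subsetneq V$. $\log=\log_2$. *)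

(* Defs.v *)
From HB Require Import structures.
From mathcomp Require Import all_boot all_order all_algebra.
From mathcomp Require Import reals exp.
Set Implicit Arguments. Unset Strict Implicit. Unset Printing Implicit Defensive.
Import Order.TTheory GRing.Theory Num.Theory.
Local Open Scope ring_scope.

Section Graphs.
Variable V : finType.

Definition simple_edges (D : {set {set V}}) : bool :=
  [forall e in D, #|e| == 2%N].

Definition adj (D : {set {set V}}) : rel V := fun a b => [set a; b] \in D.

Definition gconn (D : {set {set V}}) (u v : V) : bool := connect (adj D) u v.

Definition gconnected (D : {set {set V}}) : bool := [forall u, forall v, gconn D u v].

Definition spanning_tree (D T : {set {set V}}) : bool :=
  [&& T \subset D, gconnected T & [forall e in T, ~~ gconnected (T :\ e)]].

Variable R : realType.

Definition setw (w : {set V} -> R) (T : {set {set V}}) : R := \sum_(f in T) w f.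

(* Only meaningful when (V, D) is connected
   (the paper's value is +oo otherwise; here a junk value 0 is used, and all
   uses in the main theorem are on connected graphs). *)
Definition MST (w : {set V} -> R) (D : {set {set V}}) : R :=
  match [pick T | spanning_tree D T] with
  | Some T0 => \big[Num.min/setw w T0]_(T | spanning_tree D T) setw w T
  | None => 0
  end.

Definition pH (w : {set V} -> R) (E D : {set {set V}}) : R :=
  MST w (E :\: D) - MST w E.

Definition edges_below (w : {set V} -> R) (E : {set {set V}}) (W : R) :=
  [set f in E | w f < W].

Definition separating (D C : {set {set V}}) (u v : V) : bool :=
  (C \subset D) && ~~ gconn (D :\: C) u v.

Definition min_cost_sep (c : {set V} -> R) (D C : {set {set V}}) (u v : V) : Prop :=
  separating D C u v /\
  forall C', separating D C' u v -> setw c C <= setw c C'.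

End Graphs.

Definition log2 {R : realType} (x : R) : R := ln x / ln 2.

(* Main.v *)
Require Import Defs.
From HB Require Import structures.
From mathcomp Require Import all_boot all_order all_algebra.
From mathcomp Require Import reals exp.
From Stdlib Require Import Classical.
Set Implicit Arguments. Unset Strict Implicit. Unset Printing Implicit Defensive.
Import Order.TTheory GRing.Theory Num.Theory.
Section Basics.
Variable V : finType.
Implicit Types (D A : {set {set V}}) (x y a b : V).

Lemma adj_sym D : symmetric (adj D).
Proof. by move=> x y; rewrite /adj setUC. Qed.

Lemma gconn_sym D : connect_sym (adj D).
Proof. exact/sym_connect_sym/adj_sym. Qed.

Lemma gconn_refl D x : gconn D x x.
Proof. exact: connect0. Qed.

Lemma gconn_trans D x y z : gconn D x y -> gconn D y z -> gconn D x z.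
Proof. exact: connect_trans. Qed.

Lemma gconnC D x y : gconn D x y = gconn D y x.
Proof. by rewrite /gconn gconn_sym. Qed.

Lemma gconn_edge D x y : [set x; y] \in D -> gconn D x y.
Proof. by move=> h; apply: connect1. Qed.

Lemma gconn_mono D D' x y : D \subset D' -> gconn D x y -> gconn D' x y.
Proof.
move=> sub; apply: connect_sub => u v h; apply: connect1.
by rewrite /adj (subsetP sub).
Qed.

Lemma closed_nconn D (S : {set V}) x y :
  (forall u v, adj D u v -> u \in S -> v \in S) -> x \in S -> y \notin S ->
  ~~ gconn D x y.
Proof.
move=> cl xS yS; apply/negP => cxy.
have cl' : closed (adj D) (mem S) by apply: intro_closed; [exact: gconn_sym|].
by move: (closed_connect cl' cxy); rewrite xS (negbTE yS).
Qed.

Lemma set2_cases x y a b : [set x; y] = [set a; b] ->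
  (x = a /\ y = b) \/ (x = b /\ y = a) \/ (x = y).
Proof.
move=> h.
have xin : x \in [set a; b] by rewrite -h !inE eqxx.
have yin : y \in [set a; b] by rewrite -h !inE eqxx orbT.
have ain : a \in [set x; y] by rewrite h !inE eqxx.
have bin : b \in [set x; y] by rewrite h !inE eqxx orbT.
move: xin yin ain bin; rewrite !inE.
case/orP=> /eqP-> ; case/orP=> /eqP->; rewrite ?eqxx /=; auto.
Qed.

Lemma gconn_add D a b p q :
  gconn (D :|: [set [set a; b]]) p q ->
  [|| gconn D p q, gconn D p a && gconn D b q | gconn D p b && gconn D a q].
Proof.
move=> h.
pose Z := [pred q | [|| gconn D p q, gconn D p a && gconn D b q
                    | gconn D p b && gconn D a q]].
have cl : closed (adj (D :|: [set [set a; b]])) Z.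
  apply: intro_closed; first exact: gconn_sym.
  move=> u v; rewrite /adj in_setU in_set1 => /orP[uvD|/eqP uv].
    have cuv : gconn D u v by apply: gconn_edge.
    rewrite !inE => /or3P[h1|/andP[h1 h2]|/andP[h1 h2]].
    - by rewrite (gconn_trans h1 cuv).
    - by rewrite h1 (gconn_trans h2 cuv) orbT.
    - by rewrite h1 (gconn_trans h2 cuv) !orbT.
  case: (set2_cases uv) => [[-> ->]|[[-> ->]|->]] //; rewrite !inE.
  - move=> /or3P[h1|/andP[h1 h2]|/andP[h1 h2]].
    + by rewrite h1 gconn_refl orbT.
    + by rewrite (gconn_trans h1 _) // gconnC.
    + by rewrite h1.
  - move=> /or3P[h1|/andP[h1 h2]|/andP[h1 h2]].
    + by rewrite h1 gconn_refl !orbT.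
    + by rewrite h1.
    + by rewrite (gconn_trans h1 _) // gconnC.
have := closed_connect cl h; rewrite !inE gconn_refl /= => <-. done.
Qed.

End Basics.
Section Kappa.
Variable V : finType.
Implicit Types (D A : {set {set V}}) (x y a b : V).

Definition comp D x : {set V} := [set y | gconn D x y].
Definition CS D := [set comp D x | x in [set: V]].
Definition kappa D := #|CS D|.

Lemma mem_comp D x y : (y \in comp D x) = gconn D x y.
Proof. by rewrite inE. Qed.

Lemma comp_eq D x y : (comp D x == comp D y) = gconn D x y.
Proof.
apply/eqP/idP => [h|h].
  by rewrite -mem_comp h mem_comp gconn_refl.
apply/setP => z; rewrite !mem_comp; apply/idP/idP => hz.
  by apply: gconn_trans hz; rewrite gconnC.
exact: gconn_trans h hz.
Qed.

Definition liftc D' (C : {set V}) : {set V} := \bigcup_(z in C) comp D' z.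

Lemma liftc_comp D D' x : D \subset D' -> liftc D' (comp D x) = comp D' x.
Proof.
move=> sub; apply/setP => y; apply/bigcupP/idP.
  move=> [z]; rewrite !mem_comp => cxz czy.
  exact: gconn_trans (gconn_mono sub cxz) czy.
by move=> h; exists x; rewrite // mem_comp gconn_refl.
Qed.

Lemma CS_lift D D' : D \subset D' -> CS D' = liftc D' @: CS D.
Proof.
move=> sub; rewrite /CS -imset_comp; apply: eq_imset => x /=.
by rewrite liftc_comp.
Qed.

Lemma kappa_mono D D' : D \subset D' -> kappa D' <= kappa D.
Proof. by move=> sub; rewrite /kappa (CS_lift sub) leq_imset_card. Qed.

Lemma kappa_drop D a b : ~~ gconn D a b ->
  kappa (D :|: [set [set a; b]]) < kappa D.
Proof.
move=> nab; set D' := _ :|: _.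
have sub : D \subset D' by apply: subsetUl.
rewrite /kappa (CS_lift sub) ltn_neqAle leq_imset_card andbT.
apply/negP => /imset_injP inj.
have ca : comp D a \in CS D by apply: imset_f; rewrite inE.
have cb : comp D b \in CS D by apply: imset_f; rewrite inE.
have := inj _ _ ca cb; rewrite !liftc_comp //.
have -> : comp D' a = comp D' b.
  by apply/eqP; rewrite comp_eq; apply: gconn_edge; rewrite !inE eqxx orbT.
move=> /(_ erefl) /eqP; rewrite comp_eq; exact/negP.
Qed.

Lemma kappa_drop1 D a b : kappa D <= (kappa (D :|: [set [set a; b]])).+1.
Proof.
set D' := _ :|: _.
have sub : D \subset D' by apply: subsetUl.
rewrite /kappa (cardsD1 (comp D b) (CS D)).
rewrite -addn1 addnC leq_add ?leq_b1 //.
have inj : {in CS D :\ comp D b &, injective (liftc D')}.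
  move=> C1 C2 /setD1P[n1 /imsetP[x _ e1]] /setD1P[n2 /imsetP[y _ e2]]; subst C1 C2.
  rewrite !liftc_comp // => /eqP; rewrite comp_eq => /gconn_add.
  move=> /or3P[h|/andP[h1 h2]|/andP[h1 h2]].
  - by apply/eqP; rewrite comp_eq.
  - by move: n2; rewrite comp_eq gconnC h2.
  - by move: n1; rewrite comp_eq h1.
rewrite -(card_in_imset inj) (CS_lift sub); apply: subset_leq_card.
by apply: imsetS; apply: subD1set.
Qed.

Lemma kappa_gt0 D x : 0 < kappa D.
Proof. by apply/card_gt0P; exists (comp D x); apply: imset_f; rewrite inE. Qed.

Lemma kappa_conn D (x0 : V) : gconnected D -> kappa D = 1%N.
Proof.
move=> /forallP c.
have e : forall x, comp D x = setT.
  by move=> x; apply/setP=> y; rewrite mem_comp inE; exact: (forallP (c x) y).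
apply/eqP/cards1P; exists setT; apply/setP => C; rewrite inE.
apply/imsetP/eqP => [[x _ ->]|->]; first by rewrite e.
by exists x0; rewrite ?inE ?e.
Qed.

Lemma comp0 x : comp set0 x = [set x].
Proof.
apply/setP => y; rewrite mem_comp inE; apply/idP/idP => [/connectP[[|z p] /= h ->]|/eqP->]//.
  by rewrite /adj inE in h.
exact: gconn_refl.
Qed.

Lemma kappa0 : kappa set0 = #|V|.
Proof.
rewrite /kappa /CS (eq_imset _ comp0) card_in_imset; first by rewrite cardsT.
by move=> x y _ _ /set1_inj.
Qed.

End Kappa.
Section Forest.
Variable V : finType.
Implicit Types (D A T : {set {set V}}) (x y a b : V).

Definition simpleE D := forall f, f \in D -> exists a b, f = [set a; b] :> {set V}.

Lemma simpleE_sub D D' : D \subset D' -> simpleE D' -> simpleE D.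
Proof. by move=> sub h f fD; apply: h; apply: (subsetP sub). Qed.

Lemma split_set D f : f \in D -> D = (D :\ f) :|: [set f].
Proof. by move=> fD; rewrite setUC setD1K. Qed.

Lemma kappa_lb D : simpleE D -> #|V| <= kappa D + #|D|.
Proof.
move Hk : #|D| => k; elim: k D Hk => [|k IH] D Hk sD.
  by move/eqP: Hk; rewrite cards_eq0 => /eqP->; rewrite kappa0 addn0.
have [f fD] : exists f, f \in D.
  by apply/set0Pn; rewrite -card_gt0 Hk.
have Hk' : #|D :\ f| = k by move: Hk; rewrite (cardsD1 f) fD add1n => -[].
have h := IH _ Hk' (simpleE_sub (subD1set D f) sD).
have [a [b ef]] := sD f fD.
have d1 := kappa_drop1 (D :\ f) a b.
rewrite -ef -(split_set fD) in d1.
by rewrite addnS -addSn; apply: leq_trans h _; rewrite leq_add2r.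
Qed.

Lemma bridge_nconn T e a b : gconnected T -> ~~ gconnected (T :\ e) ->
  e = [set a; b] -> ~~ gconn (T :\ e) a b.
Proof.
move=> /forallP cT ncT ee; subst e; apply: contra ncT => cab.
apply/forallP => x; apply/forallP => y.
have : gconn T x y by exact: (forallP (cT x) y).
apply: connect_sub => u v; rewrite /adj => uvT.
case: (eqVneq [set u; v] [set a; b]) => [uve|uvne]; last first.
  by apply: connect1; rewrite /adj !inE uvne.
move: uve => /set2_cases [[-> ->]|[[-> ->]|->]] //.
- by rewrite -[connect _ _ _]/(gconn _ b a) gconnC.

Qed.

Lemma forest_kappa T A : gconnected T ->
  (forall e, e \in T -> ~~ gconnected (T :\ e)) -> A \subset T -> simpleE A ->
  kappa A + #|A| <= #|V|.
Proof.
move=> cT bT.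
move Hk : #|A| => k; elim: k A Hk => [|k IH] A Hk sub sA.
  by move/eqP: Hk; rewrite cards_eq0 => /eqP->; rewrite kappa0 addn0.
have [f fA] : exists f, f \in A.
  by apply/set0Pn; rewrite -card_gt0 Hk.
have Hk' : #|A :\ f| = k by move: Hk; rewrite (cardsD1 f) fA add1n => -[].
have sub' : A :\ f \subset T by apply: subset_trans (subD1set A f) sub.
have := IH _ Hk' sub' (simpleE_sub (subD1set A f) sA).
have [a [b ef]] := sA f fA.
have fT : f \in T by apply: (subsetP sub).
have nab : ~~ gconn (A :\ f) a b.
  apply: contra (bridge_nconn cT (bT f fT) ef); apply: gconn_mono.
  by apply: setSD.
have := kappa_drop nab; rewrite -ef -(split_set fA) => lt.
rewrite addnS => h; apply: leq_trans h; rewrite -addSn leq_add2r //.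
Qed.

End Forest.
Section Kruskal.
Variable V : finType.
Implicit Types (D A X : {set {set V}}) (x y a b : V) (p q : V * V).

Definition pe p : {set V} := [set p.1; p.2].

Definition kstep A p := if gconn A p.1 p.2 then A else A :|: [set pe p].

Fixpoint kfin A (ps : seq (V * V)) := match ps with
  | [::] => A | p :: ps' => kfin (kstep A p) ps' end.

Fixpoint kmerges A (ps : seq (V * V)) : seq ({set {set V}} * (V * V)) :=
  match ps with
  | [::] => [::]
  | p :: ps' => (if gconn A p.1 p.2 then [::] else [:: (A, p)]) ++ kmerges (kstep A p) ps'
  end.

Lemma kstep_sub A p : A \subset kstep A p.
Proof. by rewrite /kstep; case: ifP => // _; apply: subsetUl. Qed.

Lemma kstep_conn A p : gconn (kstep A p) p.1 p.2.
Proof.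
rewrite /kstep; case: ifP => // _; apply: gconn_edge.
by rewrite !inE eqxx orbT.
Qed.

Lemma kfin_sub A ps : A \subset kfin A ps.
Proof.
elim: ps A => //= p ps IH A; exact: subset_trans (kstep_sub A p) (IH _).
Qed.

Lemma kfin_conn A ps p : p \in ps -> gconn (kfin A ps) p.1 p.2.
Proof.
elim: ps A => //= p0 ps IH A; rewrite inE => /orP[/eqP->|pin]; last exact: IH.
exact: gconn_mono (kfin_sub _ _) (kstep_conn A p0).
Qed.

Lemma kfin_edges A ps f : f \in kfin A ps -> f \in A \/ exists2 p, p \in ps & f = pe p.
Proof.
elim: ps A => //= [|p ps IH] A; first by left.
move=> /IH [|[q qin ->]]; last by right; exists q; rewrite // inE qin orbT.
rewrite /kstep; case: ifP => _; first by left.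
rewrite !inE => /orP[fA|/eqP->]; first by left.
by right; exists p; rewrite ?inE ?eqxx.
Qed.

Lemma kmerges_prop A ps A' p : (A', p) \in kmerges A ps ->
  [/\ ~~ gconn A' p.1 p.2, p \in ps & A \subset A'].
Proof.
elim: ps A => //= p0 ps IH A; rewrite mem_cat => /orP[|/IH[h1 h2 h3]].
  by case: ifP => //= c; rewrite inE => /eqP[-> ->]; rewrite c inE eqxx.
by split; rewrite ?inE ?h2 ?orbT //; apply: subset_trans (kstep_sub _ _) h3.
Qed.

Local Open Scope ring_scope.
Lemma kmerges_sum (R : numDomainType) (Phi : {set {set V}} -> R) (g : {set {set V}} * (V * V) -> R) A ps :
  (forall A' p, ~~ gconn A' p.1 p.2 -> g (A', p) <= Phi (kstep A' p) - Phi A') ->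
  \sum_(m <- kmerges A ps) g m <= Phi (kfin A ps) - Phi A.
Proof.
move=> h; elim: ps A => /= [|p ps IH] A; first by rewrite big_nil subrr.
rewrite big_cat /=; case: ifP => c.
  by rewrite big_nil add0r; move: (IH A); rewrite /kstep c.
rewrite big_cons big_nil addr0.
have h2 := h A p (negbT c); have h1 := IH (kstep A p).
by apply: le_trans (lerD h2 h1) _; rewrite addrC addrA subrK.
Qed.

Local Close Scope ring_scope.
Lemma kmerges_count (P : pred ({set {set V}} * (V * V))) X A ps (x0 : V) :
  (forall A' p, ~~ gconn A' p.1 p.2 -> P (A', p) -> ~~ gconn (A' :|: X) p.1 p.2) ->
  (count P (kmerges A ps)).+1 <= kappa (A :|: X).
Proof.
move=> h; elim: ps A => /= [|p ps IH] A; first exact: kappa_gt0 x0.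
rewrite count_cat /=; case: ifP => c /=.
  by move: (IH A); rewrite /kstep c.
have e : kstep A p :|: X = (A :|: X) :|: [set [set p.1; p.2]].
  by rewrite /kstep c setUAC.
have := IH (kstep A p); rewrite e addn0.
case Pm : (P (A, p)) => /= h1.
  by apply: leq_ltn_trans h1 _; apply: kappa_drop; apply: h; rewrite ?c ?Pm.
by apply: leq_trans h1 _; apply: kappa_mono; apply: subsetUl.
Qed.

Lemma kfin_kappa A ps : kappa (kfin A ps) + #|kfin A ps| <= kappa A + #|A|.
Proof.
elim: ps A => //= p ps IH A; apply: leq_trans (IH _) _.
rewrite /kstep; case: ifP => // c.
have nin : pe p \notin A.
  by apply: contraFN c => h; apply: gconn_edge.
have card : #|A :|: [set pe p]| = #|A|.+1 by rewrite setUC cardsU1 nin.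
rewrite card addnS -addSn leq_add2r; apply: kappa_drop; exact: negbT.
Qed.

End Kruskal.
Section KruskalR.
Variable R : realType.
Variable V : finType.
Implicit Types (D A X E T : {set {set V}}) (x y a b : V) (p q : V * V).
Local Open Scope ring_scope.
Variable w : {set V} -> R.

Definition kle p q := w (pe p) <= w (pe q).
Definition kps D := sort kle [seq p <- enum [set: V * V] | pe p \in D].

Lemma kps_mem D p : (p \in kps D) = (pe p \in D).
Proof. by rewrite mem_sort mem_filter mem_enum inE andbT. Qed.

Lemma kle_total : total kle.
Proof. by move=> p q; rewrite /kle le_total. Qed.

Lemma kle_trans : transitive kle.
Proof. by move=> p q r; rewrite /kle; apply: le_trans. Qed.

Lemma kps_sorted D : sorted kle (kps D).
Proof. exact: (@sort_sorted _ kle kle_total). Qed.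

Lemma kmerges_sorted ps A A' p : sorted kle ps -> (A', p) \in kmerges A ps ->
  forall q, q \in ps -> w (pe q) < w (pe p) -> gconn A' q.1 q.2.
Proof.
elim: ps A => //= p0 ps IH A srt.
have srt' : sorted kle ps by apply: (path_sorted srt).
have hmin : all (kle p0) ps by apply: order_path_min srt; apply: kle_trans.
rewrite mem_cat => /orP[|m].
  case: ifP => //= c; rewrite inE => /eqP[eA ep]; subst A' p.
  move=> q; rewrite inE => /orP[/eqP->|qin]; first by rewrite ltxx.
  by move: (allP hmin q qin); rewrite /kle leNgt => /negbTE->.
have [_ pin sub] := kmerges_prop m.
move=> q; rewrite inE => /orP[/eqP->|qin] lt; last exact: IH srt' m q qin lt.
exact: gconn_mono sub (kstep_conn A p0).
Qed.

Definition ktree D := kfin set0 (kps D).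

Lemma ktree_edges D f : f \in ktree D -> exists2 p, pe p \in D & f = pe p.
Proof.
move=> /kfin_edges [|[p pin ->]]; first by rewrite inE.
by exists p; rewrite // -kps_mem.
Qed.

Lemma ktree_span D : gconnected D -> spanning_tree D (ktree D).
Proof.
move=> cD.
have sub : ktree D \subset D.
  by apply/subsetP => f /ktree_edges [p pD ->].
have conn : gconnected (ktree D).
  apply/forallP => x; apply/forallP => y.
  have : gconn D x y by exact: (forallP (forallP cD x) y).
  apply: connect_sub => u v uv; apply: (@kfin_conn _ set0 (kps D) (u, v)).
  by rewrite kps_mem.
apply/and3P; split => //; apply/forallP => e; apply/implyP => eT.
have [p _ ep] := ktree_edges eT.
have k1 := kappa_conn p.1 conn.
have kk := kfin_kappa set0 (kps D); rewrite kappa0 cards0 addn0 -/(ktree D) k1 in kk.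
have sT : simpleE (ktree D :\ e).
  move=> f /setD1P[_ /ktree_edges [q _ ->]]; by exists q.1, q.2.
have lb := kappa_lb sT.
apply/negP => /(kappa_conn p.1) k2.
rewrite k2 in lb. rewrite (cardsD1 e (ktree D)) eT in kk.
by move: (leq_trans kk lb); rewrite add1n ltnn.
Qed.

End KruskalR.
Section MSTbounds.
Variable R : realType.
Variable V : finType.
Implicit Types (D A X E T : {set {set V}}).
Local Open Scope ring_scope.

Lemma MST_le (w : {set V} -> R) D T : spanning_tree D T -> MST w D <= setw w T.
Proof.
move=> sT; rewrite /MST; case: pickP => [T0 _|h]; last by rewrite h in sT.
exact: bigmin_le_cond.
Qed.

Lemma MST_ge (w : {set V} -> R) D L : (exists T, spanning_tree D T) ->
  (forall T, spanning_tree D T -> L <= setw w T) -> L <= MST w D.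
Proof.
move=> [T1 s1] h; rewrite /MST; case: pickP => [T0 s0|h0]; last by rewrite h0 in s1.
by apply: le_bigmin => //; apply: h.
Qed.

Lemma seq_max (s : seq R) y1 : exists2 y0, y0 \in y1 :: s & forall y, y \in y1 :: s -> y <= y0.
Proof.
elim: s y1 => [|y2 s IH] y1; first by exists y1; rewrite ?inE ?eqxx // => y; rewrite inE => /eqP->.
have [z zin zmax] := IH y2.
case: (leP y1 z) => hy.
  exists z; first by rewrite inE zin orbT.
  by move=> y; rewrite inE => /orP[/eqP->|]; [|apply: zmax].
exists y1; first by rewrite inE eqxx.
move=> y; rewrite inE => /orP[/eqP->//|yin].
by apply: le_trans (zmax _ yin) (ltW hy).
Qed.

(* layer-cake comparison *)
Lemma layer (xs ys : seq R) :
  (forall t, t \in xs -> 0 <= t) ->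
  (forall s : R, leq (count (fun t => s <= t) ys) (count (fun t => s <= t) xs)) ->
  \sum_(t <- ys) t <= \sum_(t <- xs) t.
Proof.
move Hn : (size ys) => n; elim: n xs ys Hn => [|n IH] xs ys Hn xs0 hc.
  by move/eqP: Hn; rewrite size_eq0 => /eqP->; rewrite big_nil big_seq sumr_ge0.
have [y0 y0in y0max] : exists2 y0, y0 \in ys & forall y, y \in ys -> y <= y0.
  clear -Hn; case: ys Hn => // y1 ys _; exact: seq_max.
have : leq 1 (count (fun t => y0 <= t) xs).
  by apply: leq_trans (hc y0); rewrite -has_count; apply/hasP; exists y0.
rewrite -has_count => /hasP [x0 x0in x0ge].
rewrite (perm_big _ (perm_to_rem y0in)) (perm_big _ (perm_to_rem x0in)) !big_cons.
apply: lerD => //; apply: IH.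
- by rewrite size_rem // Hn.
- by move=> t /mem_rem; apply: xs0.
move=> s; rewrite !count_rem y0in x0in /=.
case: (leP s y0) => hs.
  by rewrite (le_trans hs x0ge) leq_sub2r.
rewrite (_ : count _ ys = 0%N) //.
apply/eqP; rewrite -leqn0 leqNgt -has_count; apply/hasP => -[y yin /= sy].
by move: (lt_le_trans hs sy); rewrite ltNge y0max.
Qed.

End MSTbounds.
From mathcomp Require Import zify.
Section Counting.
Variable R : realType.
Variable V : finType.
Implicit Types (D A X T : {set {set V}}) (x y a b : V) (p q : V * V).
Local Open Scope ring_scope.
Variable w : {set V} -> R.
Variable E : {set {set V}}.

Lemma simple_simpleE : simple_edges E -> simpleE E.
Proof.
move=> /forallP h f fE; have := implyP (h f) fE => /cards2P [a [b [_ ->]]].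
by exists a, b.
Qed.

Lemma tree_count T (x0 : V) s : simple_edges E -> spanning_tree E T ->
  leq (kappa (edges_below w E s)) (addn #|[set f in T | s <= w f]| 1).
Proof.
move=> sE /and3P[sub cT bT].
set Ts := [set f in T | w f < s].
have sTs : Ts \subset T by apply/subsetP => f; rewrite inE => /andP[].
have sT : simpleE T := simpleE_sub sub (simple_simpleE sE).
have fk := forest_kappa cT (fun e eT => implyP (forallP bT e) eT) sTs (simpleE_sub sTs sT).
have k1 := kappa_conn x0 cT.
have lb := kappa_lb sT; rewrite k1 in lb.
have mono : (kappa (edges_below w E s) <= kappa Ts)%N.
  apply: kappa_mono; apply/subsetP => f; rewrite !inE => /andP[fT ->].
  by rewrite (subsetP sub).
have part : addn #|Ts| #|[set f in T | s <= w f]| = #|T|.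
  rewrite -(cardsID [set f | w f < s] T); congr (_ + _)%N; apply: eq_card => f.
    by rewrite !inE andbC.
  by rewrite !inE andbC leNgt.
lia.
Qed.

Definition cross (S : {set V}) := [set f in E | (f :&: S != set0) && (f :\: S != set0)].
Definition wmin (d : R) (S : {set V}) := \big[Num.min/d]_(f in cross S) w f.
Definition mu (m : {set {set V}} * (V * V)) :=
  Num.max (wmin (w (pe m.2)) (comp m.1 m.2.1)) (wmin (w (pe m.2)) (comp m.1 m.2.2)).

Lemma cross_mem (S : {set V}) u v : [set u; v] \in E -> u \in S -> v \notin S ->
  [set u; v] \in cross S.
Proof.
move=> uvE uS vS; rewrite inE uvE /=; apply/andP; split; apply/set0Pn.
  by exists u; rewrite !inE eqxx uS.
by exists v; rewrite !inE eqxx orbT vS.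
Qed.

Lemma side_closed A x d s u v : s <= wmin d (comp A x) ->
  adj (A :|: edges_below w E s) u v -> u \in comp A x -> v \in comp A x.
Proof.
move=> /bigmin_geP [_ hmin]; rewrite /adj in_setU => /orP[uvA|].
  by rewrite !mem_comp => uS; apply: gconn_trans uS (gconn_edge uvA).
rewrite inE => /andP[uvE lt] uS; apply/negPn/negP => vS.
by move: (hmin _ (cross_mem uvE uS vS)); rewrite leNgt lt.
Qed.

Lemma merges_count ps (x0 : V) s :
  leq (addn (count (fun m => s <= mu m) (kmerges set0 ps)) 1) (kappa (edges_below w E s)).
Proof.
rewrite addn1; have := @kmerges_count V (fun m => s <= mu m) (edges_below w E s) set0 ps x0.
rewrite set0U; apply => A p nc; rewrite /mu le_max => /orP[h|h].
  apply: (closed_nconn (S := comp A p.1)).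
  - by move=> u v; apply: side_closed h.
  - by rewrite mem_comp gconn_refl.
  - by rewrite mem_comp.
rewrite gconnC; apply: (closed_nconn (S := comp A p.2)).
- by move=> u v; apply: side_closed h.
- by rewrite mem_comp gconn_refl.
- by rewrite mem_comp gconnC.
Qed.

End Counting.
Section Bounds.
Variable R : realType.
Variable V : finType.
Implicit Types (D A X T : {set {set V}}) (x y a b : V) (p q : V * V).
Local Open Scope ring_scope.
Variable w : {set V} -> R.
Variable E : {set {set V}}.

Lemma count_enum_set (T : {set {set V}}) (P : pred {set V}) :
  count P (enum T) = #|[set f in T | P f]|.
Proof.
rewrite -size_filter cardE; apply: perm_size; apply: uniq_perm.
- by apply: filter_uniq; apply: enum_uniq.
- exact: enum_uniq.
by move=> f; rewrite mem_filter !mem_enum !inE andbC.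
Qed.

Lemma mu_ge0 m : (forall f, f \in E -> 0 <= w f) -> pe m.2 \in E -> 0 <= mu w E m.
Proof.
move=> w0 mE; rewrite /mu le_max; apply/orP; left.
apply: le_bigmin; first exact: w0.
by move=> f; rewrite inE => /andP[fE _]; apply: w0.
Qed.

Lemma MST_E_ge ps (x0 : V) : simple_edges E -> gconnected E ->
  (forall f, f \in E -> 0 <= w f) ->
  (forall m, m \in kmerges set0 ps -> pe m.2 \in E) ->
  \sum_(m <- kmerges set0 ps) mu w E m <= MST w E.
Proof.
move=> sE cE w0 mE; apply: MST_ge.
  by exists (ktree w E); apply: ktree_span.
move=> T sT; rewrite /setw -big_enum /= -(big_map (mu w E) xpredT idfun).
rewrite -(big_map w xpredT idfun); apply: layer.
  move=> t /mapP [f fin ->]; apply: w0.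
  by move: sT => /and3P[sub _ _]; apply: (subsetP sub); rewrite -mem_enum.
move=> s; rewrite !count_map count_enum_set.
have := merges_count w E ps x0 s; have := tree_count w x0 s sE sT.
move=> h1 h2; rewrite -(leq_add2r 1); exact: leq_trans h2 h1.
Qed.

Lemma ktree_weight D : setw w (ktree w D) = \sum_(m <- kmerges set0 (kps w D)) w (pe m.2).
Proof.
have step : forall A' p, ~~ gconn A' p.1 p.2 -> setw w (kstep A' p) - setw w A' = w (pe p).
  move=> A' p nc; rewrite /kstep (negbTE nc) /setw setUC big_setU1 /= ?addrK //.
  by apply: contra nc => h; apply: gconn_edge.
apply/eqP; rewrite eq_le; apply/andP; split.
  have := @kmerges_sum V R (fun A => - setw w A) (fun m => - w (pe m.2)) set0 (kps w D).
  rewrite sumrN /setw big_set0 oppr0 subr0 lerN2 /ktree; apply => A' p nc.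
  by rewrite -(step A' p nc) /setw opprB opprK addrC.
have := @kmerges_sum V R (setw w) (fun m => w (pe m.2)) set0 (kps w D).
rewrite /setw big_set0 subr0 /ktree; apply => A' p nc; by rewrite -/(setw w _) -/(setw w _) step.
Qed.

End Bounds.
From mathcomp Require Import lra.
Section Potential.
Variable R : realType.
Variable V : finType.
Implicit Types (D A X T : {set {set V}}) (x y a b z : V) (p q : V * V).
Local Open Scope ring_scope.

Lemma log_ineq (a b : R) (x y : nat) : 0 <= a -> 0 <= b -> (0 < x)%N -> (0 < y)%N ->
  Num.min a b <= a * (log2 ((x + y)%N%:R : R) - log2 (x%:R : R))
                + b * (log2 ((x + y)%N%:R : R) - log2 (y%:R : R)).
Proof.
move=> a0 b0 x0 y0.
have l2 : 0 < ln (2 : R) by apply: ln_gt0; lra.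
have px : (0 : R) < x%:R by rewrite ltr0n.
have py : (0 : R) < y%:R by rewrite ltr0n.
have pxy : (0 : R) < (x + y)%N%:R by rewrite ltr0n addn_gt0 x0.
have mono : forall u v : R, 0 < u -> 0 < v -> u <= v -> log2 u <= log2 v.
  move=> u v pu pv uv; rewrite /log2 ler_pM2r ?invr_gt0 //.
  by rewrite ler_ln ?posrE.
have hx : log2 (x%:R : R) <= log2 ((x + y)%N%:R) by apply: mono; rewrite // ler_nat leq_addr.
have hy : log2 (y%:R : R) <= log2 ((x + y)%N%:R) by apply: mono; rewrite // ler_nat leq_addl.
have key : 1 + log2 (x%:R : R) + log2 (y%:R) <= 2 * log2 ((x + y)%N%:R).
  have h1 : ln (2 * (x%:R * y%:R)) <= ln ((x + y)%N%:R * (x + y)%N%:R : R).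
    rewrite ler_ln ?posrE ?mulr_gt0 //; rewrite natrD; nra.
  rewrite !lnM ?posrE ?mulr_gt0 // in h1.
  have k0 : 0 < (ln (2:R))^-1 by rewrite invr_gt0.
  have k1 : ln (2:R) * (ln (2:R))^-1 = 1 by rewrite mulfV // lt0r_neq0.
  rewrite /log2; nra.
set L := log2 ((x + y)%N%:R : R) in hx hy key *; set lx := log2 (x%:R : R) in hx key *; set ly := log2 (y%:R : R) in hy key *.
have m1 : Num.min a b <= a by rewrite ge_min lexx.
have m2 : Num.min a b <= b by rewrite ge_min lexx orbT.
case: (leP a b) => ab.
  have p1 : 0 <= a * (2 * L - lx - ly - 1) by apply: mulr_ge0 => //; lra.
  have p2 : 0 <= (b - a) * (L - ly) by apply: mulr_ge0; lra.
  lra.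
have p1 : 0 <= b * (2 * L - lx - ly - 1) by apply: mulr_ge0 => //; lra.
have p2 : 0 <= (a - b) * (L - lx) by apply: mulr_ge0; lra.
lra.
Qed.

End Potential.
Section CompAdd.
Variable V : finType.
Implicit Types (A : {set {set V}}) (a b z : V).

Lemma comp_add_in A a b z : z \in comp A a :|: comp A b ->
  comp (A :|: [set [set a; b]]) z = comp A a :|: comp A b.
Proof.
have hab : gconn (A :|: [set [set a; b]]) a b by apply: gconn_edge; rewrite !inE eqxx orbT.
have sub : A \subset A :|: [set [set a; b]] by apply: subsetUl.
move=> hz; apply/setP => y; rewrite mem_comp in_setU !mem_comp.
move: hz; rewrite in_setU !mem_comp => hz.
apply/idP/idP => [/gconn_add /or3P[h|/andP[h1 h2]|/andP[h1 h2]]|].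
- case/orP: hz => hz; by rewrite (gconn_trans hz h) ?orbT.
- by rewrite h2 orbT.
- by rewrite h2.
have za : gconn (A :|: [set [set a; b]]) z a.
  case/orP: hz => hz; first by rewrite gconnC; apply: gconn_mono sub hz.
  by rewrite gconnC; apply: gconn_trans hab (gconn_mono sub hz).
case/orP => h; apply: gconn_trans za _.
  exact: gconn_mono sub h.
exact: gconn_trans hab (gconn_mono sub h).
Qed.

Lemma comp_add_out A a b z : z \notin comp A a :|: comp A b ->
  comp (A :|: [set [set a; b]]) z = comp A z.
Proof.
have sub : A \subset A :|: [set [set a; b]] by apply: subsetUl.
rewrite in_setU !mem_comp negb_or => /andP[na nb].
apply/setP => y; rewrite !mem_comp; apply/idP/idP; last exact: gconn_mono.
move=> /gconn_add /or3P[//|/andP[h1 _]|/andP[h1 _]].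
  by move: na; rewrite gconnC h1.
by move: nb; rewrite gconnC h1.
Qed.

Lemma comp_disj A a b z : ~~ gconn A a b -> z \in comp A a -> z \notin comp A b.
Proof.
rewrite !mem_comp => nab az; apply: contra nab => bz.
by apply: gconn_trans az _; rewrite gconnC.
Qed.
End CompAdd.

Section Potential2.
Variable R : realType.
Variable V : finType.
Implicit Types (D A X T : {set {set V}}) (x y a b z : V) (p q : V * V).
Local Open Scope ring_scope.
Variable c : {set V} -> R.
Variable F : {set {set V}}.
Hypothesis c0 : forall f, f \in F -> 0 <= c f.

Definition nu x := \sum_(f in F | x \in f) c f.
Definition nuS (S : {set V}) := \sum_(x in S) nu x.
Definition Phi A := \sum_x nu x * log2 (#|comp A x|%:R : R).

Lemma nu_ge0 x : 0 <= nu x.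
Proof. by apply: sumr_ge0 => f /andP[fF _]; apply: c0. Qed.

Lemma nuS_ge0 S : 0 <= nuS S.
Proof. by apply: sumr_ge0 => x _; apply: nu_ge0. Qed.

Lemma phi_step A p : ~~ gconn A p.1 p.2 ->
  Num.min (nuS (comp A p.1)) (nuS (comp A p.2)) <= Phi (kstep A p) - Phi A.
Proof.
move=> nc; rewrite /kstep (negbTE nc); case: p nc => a b /= nc.
set X := comp A a; set Y := comp A b.
set A' := A :|: [set pe (a, b)].
have disj : forall z, z \in X -> z \notin Y by move=> z; apply: comp_disj.
have cardU : #|X :|: Y| = (#|X| + #|Y|)%N.
  rewrite cardsU (_ : X :&: Y = set0) ?cards0 ?subn0 //.
  apply/setP => z; rewrite in_setI in_set0; case: (boolP (z \in X)) => // zX.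
  by rewrite (negbTE (disj z zX)).
have aX : a \in X by rewrite mem_comp gconn_refl.
have bY : b \in Y by rewrite mem_comp gconn_refl.
set L := log2 ((#|X| + #|Y|)%N%:R : R).
have pt : forall z, nu z * log2 (#|comp A' z|%:R : R) - nu z * log2 (#|comp A z|%:R : R) =
   (if z \in X then nu z * (L - log2 (#|X|%:R : R)) else 0) +
   (if z \in Y then nu z * (L - log2 (#|Y|%:R : R)) else 0).
  move=> z; case: (boolP (z \in X)) => zX.
    rewrite (negbTE (disj z zX)) addr0 /A' /pe /= comp_add_in; last by rewrite in_setU zX.
    rewrite -/X -/Y cardU.
    have -> : comp A z = X.
      by apply/eqP; rewrite comp_eq gconnC -mem_comp.
    by rewrite mulrBr.
  case: (boolP (z \in Y)) => zY.
    rewrite add0r /A' /pe /= comp_add_in; last by rewrite in_setU zY orbT.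
    rewrite -/X -/Y cardU.
    have -> : comp A z = Y.
      by apply/eqP; rewrite comp_eq gconnC -mem_comp.
    by rewrite mulrBr.
  rewrite /A' /pe /= comp_add_out ?subrr ?addr0 //; by rewrite in_setU negb_or zX zY.
rewrite /Phi -sumrB (eq_bigr _ (fun z _ => pt z)) big_split /= -!big_mkcond /=.
rewrite -!mulr_suml -/(nuS X) -/(nuS Y) /L.
apply: log_ineq; rewrite ?nuS_ge0 //; apply/card_gt0P.
  by exists a.
by exists b.
Qed.

End Potential2.
Section NuSums.
Variable R : realType.
Variable V : finType.
Implicit Types (A T : {set {set V}}) (x y a b z : V) (p q : V * V).
Local Open Scope ring_scope.
Variable c : {set V} -> R.
Variable F : {set {set V}}.
Hypothesis c0 : forall f, f \in F -> 0 <= c f.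

Lemma sum_subset_le (C0 : {set {set V}}) (h : {set V} -> R) :
  C0 \subset F -> (forall g, g \in F -> 0 <= h g) ->
  \sum_(g in C0) h g <= \sum_(g in F) h g.
Proof.
move=> sub h0; rewrite [X in _ <= X](big_setID C0) /= (setIidPr sub) lerDl.
by apply: sumr_ge0 => g; rewrite inE => /andP[_ /h0].
Qed.

Lemma nuS_formula S : nuS c F S = \sum_(g in F) #|g :&: S|%:R * c g.
Proof.
rewrite /nuS /nu.
rewrite (eq_bigr (fun x => \sum_(g in F) (if x \in g then c g else 0))); last first.
  by move=> x _; rewrite big_mkcondr.
rewrite exchange_big /=; apply: eq_bigr => g _.
rewrite -big_mkcondr /= (eq_bigl (fun x => x \in g :&: S)); last first.
  by move=> x; rewrite inE andbC.
by rewrite sumr_const mulr_natl.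
Qed.

Lemma cut_le_nuS (C0 : {set {set V}}) S : C0 \subset F ->
  (forall g, g \in C0 -> g :&: S != set0) -> setw c C0 <= nuS c F S.
Proof.
move=> sub meet; rewrite nuS_formula /setw.
apply: le_trans (sum_subset_le (h := fun g => #|g :&: S|%:R * c g) sub _); last first.
  by move=> g gF; rewrite mulr_ge0 ?c0.
apply: ler_sum => g gC; rewrite ler_peMl ?c0 ?(subsetP sub) //.
by rewrite ler1n lt0n cards_eq0 meet.
Qed.

Lemma sum_nu : simple_edges F -> \sum_x nu c F x = 2 * setw c F.
Proof.
move=> /forallP sF.
have := nuS_formula setT; rewrite /nuS (eq_bigl xpredT) => [->|x]; last by rewrite inE.
rewrite /setw mulr_sumr; apply: eq_bigr => g gF.
by rewrite setIT (eqP (implyP (sF g) gF)).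
Qed.

Lemma phi0 : Phi c F set0 = 0.
Proof.
rewrite /Phi big1 // => x _; rewrite comp0 cards1 /log2 ln1 mul0r mulr0 //.
Qed.

Lemma phi_conn A : gconnected A -> Phi c F A = (\sum_x nu c F x) * log2 (#|V|%:R : R).
Proof.
move=> /forallP cA; rewrite /Phi mulr_suml; apply: eq_bigr => x _.
have -> : comp A x = setT.
  by apply/setP => y; rewrite mem_comp inE; exact: (forallP (cA x) y).
by rewrite cardsT.
Qed.

End NuSums.

Section Misc.
Variable R : realType.
Local Open Scope ring_scope.

Lemma ltr_sum_ex (I : eqType) (r : seq I) (F G : I -> R) :
  (forall i, i \in r -> F i <= G i) -> (exists2 i, i \in r & F i < G i) ->
  \sum_(i <- r) F i < \sum_(i <- r) G i.
Proof.
move=> le [i ir lt].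
rewrite !(perm_big _ (perm_to_rem ir)) !big_cons; apply: ltr_leD => //.
by rewrite big_seq_cond [X in _ <= X]big_seq_cond; apply: ler_sum => j /andP[/mem_rem /le].
Qed.

Lemma bigmin_attained (I : finType) (P : pred I) (f : I -> R) d :
  \big[Num.min/d]_(i | P i) f i = d \/ exists2 i, P i & \big[Num.min/d]_(i | P i) f i = f i.
Proof.
apply: (big_ind (fun v => v = d \/ exists2 i, P i & v = f i)).
- by left.
- by move=> x y hx hy; case: (leP x y).
- by move=> i Pi; right; exists i.
Qed.

End Misc.
Section Side.
Variable R : realType.
Variable V : finType.
Local Open Scope ring_scope.

Lemma pair_eq (f : {set V}) u v : #|f| = 2 -> u \in f -> v \in f -> u != v -> f = [set u; v].
Proof.
move=> cf uf vf uv; apply/eqP; rewrite eq_sym eqEcard cf cards2 uv andbT.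
by rewrite subUset !sub1set uf vf.
Qed.

Variables (E : {set {set V}}) (w c : {set V} -> R) (F : {set {set V}}) (B alpha : R).
Hypotheses (hs : simple_edges E) (hc : forall f, f \in E -> 0 < c f)
  (hF : F \subset E) (hB : setw c F <= B) (ha : 0 <= alpha).
Hypothesis hneg : ~ exists (e : {set V}) (u v : V) (W : R),
    [/\ e \in E, e = [set u; v], u != v,
        (exists2 f, f \in E & W = w f) &
        forall C, min_cost_sep c (edges_below w E W) C u v ->
          [/\ 0 < setw c C, setw c C <= B &
              (W - w e) / setw c C >= alpha]].

Lemma side_lemma (A : {set {set V}}) (a b : V) : ~~ gconn A a b ->
  [set a; b] \in E :\: F ->
  (forall u v, [set u; v] \in E :\: F -> w [set u; v] < w [set a; b] -> gconn A u v) ->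
  0 < w [set a; b] - wmin w E (w [set a; b]) (comp A a) ->
  w [set a; b] - wmin w E (w [set a; b]) (comp A a) < alpha * nuS c F (comp A a).
Proof.
set d := w [set a; b]; set S := comp A a => nc abG sortP tpos.
have [eqd|[f fcross fmin]] := bigmin_attained (fun f => f \in cross E S) w d.
  by move: tpos; rewrite /wmin eqd subrr ltxx.
rewrite -/(wmin w E d S) in fmin.
rewrite ltNge; apply/negP => hge; apply: hneg.
move: (fcross); rewrite inE => /andP[fE /andP[/set0Pn [u] uS /set0Pn [v] vS]].
rewrite in_setI in uS; case/andP: uS => uf uS.
rewrite in_setD in vS; case/andP: vS => vS vf.
have uv : u != v by apply: contraNneq vS => <-.
have cf : #|f| = 2 by apply/eqP; exact: (implyP (forallP hs f) fE).
have ef := pair_eq cf uf vf uv.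
have abE : [set a; b] \in E by move: abG; rewrite in_setD => /andP[].
have wfd : w f < d by rewrite -fmin; move: tpos; rewrite subr_gt0.
exists f, u, v, d; split => //; first by exists [set a; b].
move=> C [sepC minC].
set C0 := [set g in F | (w g < d) && (g \in cross E S)].
have sep0 : separating (edges_below w E d) C0 u v.
  apply/andP; split.
    apply/subsetP => g; rewrite !inE => /andP[gF /andP[lt _]].
    by rewrite (subsetP hF) // lt.
  apply: (closed_nconn (S := S)) => // y z; rewrite /adj in_setD => /andP[ng].
  rewrite inE => /andP[gE lt] yS; apply/negPn/negP => zS.
  have gcr := cross_mem gE yS zS.
  case: (boolP ([set y; z] \in F)) => gF.
    by move: ng; rewrite inE gF lt gcr.
  have gG : [set y; z] \in E :\: F by rewrite in_setD gF gE.
  have := sortP y z gG lt => cyz.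
  by move: zS; rewrite mem_comp (gconn_trans _ cyz) // -mem_comp.
have c0F : forall g, g \in F -> 0 <= c g by move=> g gF; apply/ltW/hc/(subsetP hF).
have cC0 : setw c C <= setw c C0 := minC C0 sep0.
have le0 : setw c C0 <= nuS c F S.
  apply: cut_le_nuS => //.
    by apply/subsetP => g; rewrite inE => /andP[].
  move=> g; rewrite !inE => /andP[_ /andP[_ /andP[_ /andP[h _]]]]; exact: h.
have leB : setw c C0 <= B.
  apply: le_trans hB; apply: sum_subset_le => //.
  by apply/subsetP => g; rewrite inE => /andP[].
move: sepC => /andP[subC ncC].
have fC : f \in C.
  apply/negPn/negP => fnC; move: ncC; rewrite gconn_edge //.
  by rewrite in_setD -ef fnC inE fE wfd.
have Epos : forall g, g \in C -> 0 < c g.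
  by move=> g gC; apply: hc; move: (subsetP subC g gC); rewrite inE => /andP[].
have pos : 0 < setw c C.
  rewrite /setw (bigD1 f) //= ltr_pwDl ?Epos //.
  by apply: sumr_ge0 => g /andP[gC _]; apply/ltW/Epos.
split => //; first exact: le_trans cC0 leB.
rewrite ler_pdivlMr // -fmin; apply: le_trans hge.
by apply: ler_wpM2l => //; apply: le_trans cC0 le0.
Qed.

End Side.
Section Combine.
Variable R : realType.
Local Open Scope ring_scope.
Lemma combine (t tX tY a b al : R) : t <= tX -> t <= tY ->
  (0 < tX -> tX < al * a) -> (0 < tY -> tY < al * b) ->
  0 <= al -> 0 <= a -> 0 <= b ->
  (t <= al * Num.min a b) /\ (0 < t -> t < al * Num.min a b).
Proof.
move=> h1 h2 hX hY al0 a0 b0.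
have pa : 0 <= al * a by apply: mulr_ge0.
have pb : 0 <= al * b by apply: mulr_ge0.
have hX' : tX <= al * a by case: (ltP 0 tX) => h; [exact/ltW/hX | lra].
have hY' : tY <= al * b by case: (ltP 0 tY) => h; [exact/ltW/hY | lra].
case: (leP a b) => ab.
  split; first lra.
  by move=> t0; have := hX (lt_le_trans t0 h1); lra.
split; first lra.
by move=> t0; have := hY (lt_le_trans t0 h2); lra.
Qed.
End Combine.
Unset Implicit Arguments.
Set Strict Implicit.
Local Open Scope ring_scope.

Theorem mainTheorem15 (R : realType) (V : finType) (E : {set {set V}})
  (w c : {set V} -> R) (F : {set {set V}}) (B P : R) :
  simple_edges E ->
  gconnected E ->
  (2 <= #|V|)%N ->
  (forall f, f \in E -> 0 <= w f) ->
  (forall f, f \in E -> 0 < c f) ->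
  F \subset E ->
  setw c F <= B ->
  gconnected (E :\: F) ->
  pH w E F = P -> 0 < P ->
  exists (e : {set V}) (u v : V) (W : R),
    [/\ e \in E, e = [set u; v], u != v,
        (exists2 f, f \in E & W = w f) &
        forall C, min_cost_sep c (edges_below w E W) C u v ->
          [/\ 0 < setw c C, setw c C <= B &
              (W - w e) / setw c C >= P / (2 * B * log2 (#|V|%:R))]].
Proof.
move=> hs hconn hn hw hc hF hB hG hP hP0.
have [x0 _] : exists x0 : V, x0 \in [set: V].
  by apply/set0Pn; rewrite -card_gt0 cardsT; apply: leq_trans hn.
set G := E :\: F.
set ps := kps w G.
set ms := kmerges set0 ps.
have GE : G \subset E by apply: subsetDl.
have msE : forall m, m \in ms -> pe m.2 \in G.
  by move=> [A p] /kmerges_prop [_ pin _]; rewrite /ps kps_mem in pin.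
have hPle : P <= \sum_(m <- ms) (w (pe m.2) - mu w E m).
  rewrite sumrB -hP /pH.
  apply: lerB.
    rewrite -ktree_weight; apply: MST_le; exact: ktree_span.
  apply: MST_E_ge => // m /msE; exact: (subsetP GE).
have Fne : F != set0.
  apply/negP => /eqP F0; move: hP0; rewrite -hP /pH F0 setD0 subrr ltxx //.
have cFpos : 0 < setw c F.
  case/set0Pn: Fne => f fF; rewrite /setw (bigD1 f) //= ltr_pwDl ?hc ?(subsetP hF) //.
  by apply: sumr_ge0 => g /andP[gF _]; apply/ltW/hc/(subsetP hF).
have Bpos : 0 < B by apply: lt_le_trans hB.
have l2 : 0 < ln (2 : R) by apply: ln_gt0; rewrite ltr1n.
have lnpos : 0 < ln (#|V|%:R : R) by apply: ln_gt0; rewrite ltr1n.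
have logpos : 0 < log2 (#|V|%:R : R) by rewrite /log2 divr_gt0.
have den : 0 < 2 * B * log2 (#|V|%:R : R) by apply: mulr_gt0 => //; apply: mulr_gt0.
set alpha := P / (2 * B * log2 (#|V|%:R)).
have a0 : 0 <= alpha by rewrite /alpha divr_ge0 // ltW.
case: (classic (exists (e : {set V}) (u v : V) (W : R),
    [/\ e \in E, e = [set u; v], u != v,
        (exists2 f, f \in E & W = w f) &
        forall C, min_cost_sep c (edges_below w E W) C u v ->
          [/\ 0 < setw c C, setw c C <= B &
              (W - w e) / setw c C >= alpha]])) => // hneg.
exfalso.
have c0F : forall g, g \in F -> 0 <= c g by move=> g gF; apply/ltW/hc/(subsetP hF).
pose t m := w (pe m.2) - mu w E m.
pose s m := alpha * Num.min (nuS c F (comp m.1 m.2.1)) (nuS c F (comp m.1 m.2.2)).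
have tsm : forall m, m \in ms -> (t m <= s m) /\ (0 < t m -> t m < s m).
  move=> [A [a b]] min; have := kmerges_prop min => -[nc pin _].
  have sortP : forall u v, [set u; v] \in G -> w [set u; v] < w [set a; b] -> gconn A u v.
    move=> u v uvG lt.
    have := kmerges_sorted (kps_sorted w G) min (q := (u, v)).
    by rewrite kps_mem; apply.
  have abG : [set a; b] \in G by move: pin; rewrite /ps kps_mem.
  have sX := side_lemma hs hc hF hB a0 hneg nc abG sortP.
  have ebc : [set b; a] = [set a; b] by rewrite setUC.
  have sY := side_lemma hs hc hF hB a0 hneg (b := a) (a := b).
  rewrite ebc in sY.
  have := sY A; rewrite gconnC => /(_ nc abG sortP) {}sY.
  rewrite /t /s /mu /pe /=.
  apply: (combine (tX := w [set a; b] - wmin w E (w [set a; b]) (comp A a))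
                  (tY := w [set a; b] - wmin w E (w [set a; b]) (comp A b))); rewrite ?nuS_ge0 //.
  - by apply: lerB => //; rewrite le_max lexx.
  - by apply: lerB => //; rewrite le_max lexx orbT.
have [m0 m0in t0] : exists2 m, m \in ms & 0 < t m.
  case: (classic (exists2 m, m \in ms & 0 < t m)) => // hno; exfalso.
  have : \sum_(m <- ms) t m <= 0.
    rewrite big_seq; apply: sumr_le0 => m min; rewrite leNgt; apply/negP => tp.
    by apply: hno; exists m.
  by move: hPle; rewrite -/(t _) => h1 h2; have := le_trans h1 h2; rewrite leNgt hP0.
have lt := @ltr_sum_ex R _ ms t s (fun m min => (tsm m min).1)
  (ex_intro2 _ _ m0 m0in ((tsm m0 m0in).2 t0)).
have sF : simple_edges F.
  apply/forallP => f; apply/implyP => fF; exact: (implyP (forallP hs f) (subsetP hF f fF)).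
have sum_s : \sum_(m <- ms) s m <= P.
  rewrite /s -mulr_sumr.
  have h1 := @kmerges_sum V R (Phi c F)
    (fun m => Num.min (nuS c F (comp m.1 m.2.1)) (nuS c F (comp m.1 m.2.2))) set0 ps
    (fun A' p nc => phi_step c0F nc).
  have kc : gconnected (kfin set0 ps).
    by have := ktree_span w hG => /and3P[].
  rewrite phi0 subr0 (phi_conn _ _ kc) (sum_nu c sF) in h1.
  have h2 : 2 * setw c F * log2 (#|V|%:R : R) <= 2 * B * log2 (#|V|%:R : R).
    by rewrite ler_pM2r // ler_pM2l.
  apply: le_trans (ler_wpM2l a0 (le_trans h1 h2)) _.
  by rewrite /alpha divfK // lt0r_neq0.
have := le_lt_trans hPle lt; rewrite -/(t _).
by move=> h; have := lt_le_trans h sum_s; rewrite ltxx.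
Qed.
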